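(* Let $G$ be a connected graph with $N$ vertices and maximum degree $\Delta$, let $R$ be a positive integer, and assume $N>\Delta^{4R}+1$. Let $H$ be an operator (not necessarily Hermitian) on the qubits at the vertices of $G$ that has range at most $R$ and satisfies $H|W\rangle=\lambda|W\rangle$ for some $\lambda\in\mathbb{C}$. Then there exist constants $\Omega,\omega\in\mathbb{C}$ and operators $h_X$, indexed by subsets $X$ of vertices with $\mathrm{diam}(X)\le 2R$, each supported in $X$ and satisfying $h_X|W\rangle=h_X|\overline 0\rangle=0$, such that $$H=\Omega I+\omega\sum_i s_i^\dagger s_i+\sum_{X:\mathrm{diam}(X)\le 2R}h_X .$$
   Context: System of $N$ qubits on the vertices of a graph $G$ with local basis $|0\rangle,|1\rangle$. For each vertex $i$, $s_i^\dagger$ acts on $i$ as $s^\dagger|0\rangle=|1\rangle$, $s^\dagger|1\rangle=0$, $s_i=(s_i^\dagger)^\dagger$; $|\overline 0\rangle=|0\rangle^{\otimes N}$. Distances $|\mathbf r_i-\mathbf r_j|$ are graph distances. Every operator has a unique expansion in normal-ordered strings $s^\dagger_{j_1}\cdots s^\dagger_{j_n}s_{k_1}\cdots s_{k_m}$ (the $j$'s pairwise distinct, the $k$'s pairwise distinct, overlaps allowed; the empty string is $I$), whose sites are $\{j_1,\dots,j_n,k_1,\dots,k_m\}$. A string has range $R$, where $R$ is the smallest positive integer with all pairwise distances between its sites $<R$; an operator has range at most $R$ if every string with nonzero coefficient has range at most $R$. For a vertex set $X$, $\mathrm{diam}(X)=1+\max_{i,j\in X}|\mathbf r_i-\mathbf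 r_j|$. An operator is supported in $X$ if it acts as the identity outside $X$. $|W\rangle=N^{-1/2}\sum_i s_i^\dagger|\overline 0\rangle$. *)

(* Defs.v *)
From HB Require Import structures.
From mathcomp Require Import all_boot all_order all_algebra.
From mathcomp Require Import reals.
From mathcomp Require Import complex.
Set Implicit Arguments. Unset Strict Implicit. Unset Printing Implicit Defensive.
Import Order.TTheory GRing.Theory Num.Theory.
Local Open Scope ring_scope.

Section QubitGraph.
Variable R : realType.
Notation C := (R[i]).
Variable V : finType.
Variable e : rel V.

Fixpoint reach (n : nat) (i j : V) : bool :=
  if n is n'.+1 then reach n' i j || [exists k, reach n' i k && e k j]
  else i == j.

(* graph distance (for a connected graph every distance is < #|V|) *)
Definition dist (i j : V) : nat := find (fun n => reach n i j) (iota 0 #|V|).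

Definition maxdeg : nat := \max_(i : V) #|[set j | e i j]|.

Definition diam (X : {set V}) : nat := (\max_(i in X) \max_(j in X) dist i j).+1.

(* range of a string with site set S: smallest positive integer R with
   all pairwise distances < R, i.e. 1 + max distance (1 if S is empty) *)
Definition srange (S : {set V}) : nat := (\max_(i in S) \max_(j in S) dist i j).+1.

Definition state := {ffun V -> bool}.
Definition dimH := #|{: state}|.
Definition op := 'M[C]_dimH.
Definition vec := 'cV[C]_dimH.

Definition mkop (f : state -> state -> C) : op :=
  \matrix_(a, b) f (enum_val a) (enum_val b).
Definition mkvec (f : state -> C) : vec := \col_a f (enum_val a).

(* s_i^dagger |0>=|1>, s_i^dagger |1> = 0 on site i *)
Definition sdag (i : V) : op :=
  mkop (fun x y => if ~~ y i && (x == [ffun v => if v == i then true else y v])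
                   then 1 else 0).
Definition sop (i : V) : op := map_mx (fun z => z^*) (sdag i)^T.

(* normal-ordered string  s^dag_{j1}..s^dag_{jn} s_{k1}..s_{km}  with
   {j1..jn} = J, {k1..km} = K *)
Definition nstring (J K : {set V}) : op :=
  foldr mulmx 1%:M ([seq sdag j | j <- enum J] ++ [seq sop k | k <- enum K]).

(* H has range at most Rr: in its (unique) normal-ordered expansion every
   string with nonzero coefficient has range at most Rr *)
Definition range_le (Rr : nat) (H : op) : Prop :=
  exists c : {set V} -> {set V} -> C,
    H = \sum_(J : {set V}) \sum_(K : {set V}) c J K *: nstring J K /\
    forall J K, c J K != 0 -> (srange (J :|: K) <= Rr)%N.

(* supported in X: H = A (x) I_{outside X} *)
Definition local (X : {set V}) := {ffun {v : V | v \in X} -> bool}.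
Definition restr (X : {set V}) (x : state) : local X := [ffun v => x (val v)].
Definition supported (X : {set V}) (H : op) : Prop :=
  exists A : local X -> local X -> C,
    H = mkop (fun x y => A (restr X x) (restr X y) *
                         \prod_(v in ~: X) (x v == y v)%:R).

Definition vac : vec := mkvec (fun y => (y == [ffun _ => false])%:R).
Definition Wst : vec :=
  mkvec (fun y => if #|[set v | y v]| == 1%N then (sqrtC (#|V|%:R))^-1 else 0).

Definition numop : op := \sum_(i : V) sdag i *m sop i.

End QubitGraph.

(* Main.v *)
Require Import Defs.
From HB Require Import structures.
From mathcomp Require Import all_boot all_order all_algebra.
From mathcomp Require Import reals.
From mathcomp Require Import complex.
From mathcomp Require Import zify.
Set Implicit Arguments. Unset Strict Implicit. Unset Printing Implicit Defensive.

Section Graph.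
Variable V : finType.
Variable e : rel V.
Hypothesis e_sym : symmetric e.

Lemma reachS n i j : reach e n i j -> reach e n.+1 i j.
Proof. by move=> h /=; rewrite h. Qed.

Lemma reach_le m n i j : (m <= n)%N -> reach e m i j -> reach e n i j.
Proof.
move=> mn; rewrite -(subnKC mn); elim: (n - m)%N => [|k IH]; first by rewrite addn0.
by move=> h; rewrite addnS; apply: reachS; apply: IH.
Qed.

Lemma reach_trans m n i j k :
  reach e m i j -> reach e n j k -> reach e (m + n) i k.
Proof.
move=> hij; elim: n k => [|n IH] k /=.
  by move/eqP=> <-; rewrite addn0.
rewrite addnS /= => /orP [h|/existsP [l /andP [h el]]].
  by rewrite IH.
by apply/orP; right; apply/existsP; exists l; rewrite IH.
Qed.

Lemma reach_edge i j : e i j -> reach e 1 i j.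
Proof. by move=> h /=; apply/orP; right; apply/existsP; exists i; rewrite eqxx. Qed.

Lemma reach_sym n i j : reach e n i j -> reach e n j i.
Proof.
elim: n i j => [|n IH] i j; first by rewrite /= eq_sym.
move=> h; have : reach e n.+1 i j by [].
rewrite /= in h; case/orP: h => [h|/existsP [k /andP [h ekj]]] _.
  by apply: reachS; rewrite IH.
rewrite -add1n; apply: reach_trans (IH _ _ h).
by apply: reach_edge; rewrite e_sym.
Qed.


Lemma reach_dist n i j : reach e n i j -> (dist e i j <= n)%N.
Proof.
move=> h; rewrite /dist; set s := iota 0 #|V|.
case: (ltnP n #|V|) => nV; last first.
  by apply: leq_trans (find_size _ _) _; rewrite size_iota.
rewrite leqNgt; apply/negP => lt.
have := before_find 0 lt; rewrite nth_iota // add0n h //.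
Qed.

Lemma dist_reach n i j : (dist e i j <= n)%N -> (n < #|V|)%N -> reach e n i j.
Proof.
move=> dn nV.
have hs : has (fun n => reach e n i j) (iota 0 #|V|).
  by rewrite has_find size_iota (leq_ltn_trans dn nV).
apply: reach_le dn _.
have := nth_find 0 hs; rewrite nth_iota ?add0n //.
by move: hs; rewrite has_find size_iota.
Qed.

Lemma reach_front i j k n : e i j -> reach e n j k -> reach e n.+1 i k.
Proof. by move=> eij h; rewrite -add1n; apply: reach_trans h; apply: reach_edge. Qed.

Lemma connect_reach i j : connect e i j -> exists n, reach e n i j.
Proof.
case/connectP=> p; elim: p i => [|k p IH] i /=.
  by move=> _ ->; exists 0%N; rewrite /= eqxx.
case/andP=> eik pk lj; have [n hn] := IH _ pk lj.
by exists n.+1; apply: reach_front eik hn.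
Qed.

Lemma diam_le (X : {set V}) n :
  (forall u v, u \in X -> v \in X -> reach e n u v) -> (diam e X <= n.+1)%N.
Proof.
move=> h; rewrite /diam ltnS; apply/bigmax_leqP=> u uX; apply/bigmax_leqP=> v vX.
exact: reach_dist (h _ _ uX vX).
Qed.

Lemma srange_reach (S : {set V}) r u v : (srange e S <= r.+1)%N -> (r < #|V|)%N ->
  u \in S -> v \in S -> reach e r u v.
Proof.
move=> hS rV uS vS; apply: dist_reach rV.
rewrite /srange ltnS in hS.
move/bigmax_leqP: hS => /(_ u uS) /bigmax_leqP /(_ v vS) //.
Qed.


Definition ball a n := [set v | reach e n a v].

Lemma card_bigcup (I : finType) (P : pred I) (F : I -> {set V}) :
  (#|\bigcup_(i | P i) F i| <= \sum_(i | P i) #|F i|)%N.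
Proof.
elim/big_rec2: _ => [|i n A _ IH]; first by rewrite cards0. rewrite cardsU; apply: leq_trans (leq_subr _ _) _.
by rewrite leq_add2l.
Qed.

Lemma deg_le k : (#|[set j | e k j]| <= maxdeg e)%N.
Proof. by rewrite /maxdeg; apply: (@leq_bigmax _ (fun i => #|[set j | e i j]|) k). Qed.

Lemma ball_card a n : (#|ball a n| <= (maxdeg e).+1 ^ n)%N.
Proof.
elim: n => [|n IH].
  rewrite expn0 (_ : ball a 0 = [set a]) ?cards1 //.
  by apply/setP=> v; rewrite !inE eq_sym.
have sub : ball a n.+1 \subset \bigcup_(k in ball a n) (k |: [set j | e k j]).
  apply/subsetP=> v; rewrite inE /= => /orP [h|/existsP [k /andP [h ekv]]].
    by apply/bigcupP; exists v; rewrite ?inE ?eqxx.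
  by apply/bigcupP; exists k; rewrite !inE ?ekv ?orbT.
apply: leq_trans (subset_leq_card sub) _.
apply: leq_trans (card_bigcup _ _) _.
have hs : (\sum_(k in ball a n) #|k |: [set j | e k j]| <= \sum_(k in ball a n) (maxdeg e).+1)%N.
  by apply: leq_sum => k _; rewrite cardsU1 -add1n; apply: leq_add (leq_b1 _) (deg_le k).
apply: leq_trans hs _.
by rewrite sum_nat_const expnSr leq_mul2r IH orbT.
Qed.

Hypothesis e_conn : forall i j : V, connect e i j.

Lemma small_deg_contra : (maxdeg e <= 1)%N -> (maxdeg e).+1 < #|V| -> False.
Proof.
move=> D1 NV.
have : (0 < #|V|)%N by apply: leq_trans NV.
case/card_gt0P=> a _.
have all1 : forall n v, reach e n a v -> reach e 1 a v.
  elim=> [|n IH] v; first by move=> h; apply: reachS.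
  rewrite /= => /orP [h|/existsP [k /andP [h ekv]]]; first exact: IH.
  have := IH _ h; rewrite /= => /orP [/eqP ak|/existsP [k' /andP [/eqP ak' eak]]].
    by apply/orP; right; apply/existsP; exists a; rewrite eqxx ak.
  rewrite -ak' in eak.
  case: (eqVneq v a) => [->|va]; first by [].
  have : (#|[set a; v]| <= #|[set j | e k j]|)%N.
    apply: subset_leq_card; apply/subsetP=> w; rewrite !inE.
    by case/orP=> /eqP ->; rewrite // e_sym.
  rewrite cards2 eq_sym va => h2.
  by have := leq_trans h2 (leq_trans (deg_le k) D1).
have : (#|V| <= #|ball a 1|)%N.
  rewrite -(cardsT V); apply: subset_leq_card; apply/subsetP=> v _.
  by have [n hn] := connect_reach (e_conn a v); rewrite inE (all1 _ _ hn).
move/leq_trans/(_ (ball_card a 1)); rewrite expn1 => h.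
by have := leq_trans NV h; rewrite ltnn.
Qed.

Lemma far2 m : (2 <= maxdeg e)%N -> (2 * (maxdeg e).+1 ^ m < #|V|)%N ->
  forall a b, exists d, ~~ reach e m a d && ~~ reach e m b d.
Proof.
move=> D2 NV a b.
have : ~~ ([set: V] \subset ball a m :|: ball b m).
  apply/negP=> /subset_leq_card; rewrite cardsT => h.
  have hU : (#|ball a m :|: ball b m| <= #|ball a m| + #|ball b m|)%N.
    by rewrite cardsU leq_subr.
  have := leq_trans (leq_trans h hU) (leq_add (ball_card a m) (ball_card b m)).
  by rewrite addnn -mul2n leqNgt NV.
case/subsetPn=> d _; rewrite !inE negb_or => hd; by exists d.
Qed.

End Graph.

Import Order.TTheory GRing.Theory Num.Theory.
Local Open Scope ring_scope.

Section Ops.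
Variable R : realType.
Variable V : finType.
Notation C := (R[i]).
Notation op := (op R V).
Notation vec := (vec R V).
Notation state := (state V).

Definition ex (Y : {set V}) : state := [ffun v => v \in Y].
Definition st (y : state) : {set V} := [set v | y v].
Lemma exK : cancel ex st.
Proof. by move=> Y; apply/setP=> v; rewrite !inE ffunE. Qed.
Lemma stK : cancel st ex.
Proof. by move=> y; apply/ffunP=> v; rewrite ffunE inE. Qed.

Definition bvec (Y : {set V}) : vec := mkvec (fun y => (st y == Y)%:R).
Definition opS (f : {set V} -> option {set V}) : op :=
  mkop (fun x y => (f (st y) == Some (st x))%:R).

Lemma mkop_ext (f g : state -> state -> C) :
  (forall x y, f x y = g x y) -> mkop f = mkop g.
Proof. by move=> H; apply/matrixP=> a b; rewrite !mxE H. Qed.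

Definition ridx (Y : {set V}) : 'I_(dimH V) := enum_rank (ex Y).

Lemma mulmx_bvec (M : op) Y a : (M *m bvec Y) a 0 = M a (ridx Y).
Proof.
rewrite !mxE (bigD1 (ridx Y)) //= big1 ?addr0.
  by rewrite mxE /ridx enum_rankK exK eqxx mulr1.
move=> b nb; rewrite mxE; case: eqP => [E|]; last by rewrite mulr0.
by case/eqP: nb; rewrite /ridx -E stK enum_valK.
Qed.

Lemma mx_bvec_ext (M N : op) : (forall Y, M *m bvec Y = N *m bvec Y) -> M = N.
Proof.
move=> H; apply/matrixP=> a b.
have := congr1 (fun v : vec => v a 0) (H (st (enum_val b))).
by rewrite /= !mulmx_bvec /ridx stK enum_valK.
Qed.

Lemma opS_bvec f Y : opS f *m bvec Y = if f Y is Some Z then bvec Z else 0.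
Proof.
apply/colP=> a; rewrite mulmx_bvec /opS mxE /ridx enum_rankK exK.
case: (f Y) => [Z|]; last by rewrite mxE.
by rewrite !mxE (inj_eq (@Some_inj _)) eq_sym.
Qed.

Lemma opS_mul f g : opS f *m opS g = opS (fun Y => obind f (g Y)).
Proof.
apply: mx_bvec_ext=> Y; rewrite -mulmxA !opS_bvec.
by case: (g Y) => [Z|] /=; rewrite ?opS_bvec ?mulmx0.
Qed.

Lemma opS_Some : opS (@Some _) = 1%:M.
Proof. by apply: mx_bvec_ext=> Y; rewrite opS_bvec mul1mx. Qed.

Definition fdag (i : V) (Y : {set V}) := if i \in Y then None else Some (i |: Y).
Definition fs (i : V) (Y : {set V}) := if i \in Y then Some (Y :\ i) else None.

Lemma sdagE i : sdag R i = opS (fdag i).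
Proof.
apply: mkop_ext=> x y; rewrite /fdag inE.
case: (y i) => //=.
rewrite (inj_eq (@Some_inj _)).
have -> : (x == [ffun v => if v == i then true else y v]) = (i |: st y == st x).
  apply/eqP/eqP => [->|E].
    by apply/setP=> v; rewrite !inE ffunE; case: eqP.
  by apply: (can_inj stK); rewrite -E; apply/setP=> v; rewrite !inE ffunE; case: eqP.
by case: (i |: st y == st x).
Qed.

Lemma sopE i : sop R i = opS (fs i).
Proof.
apply/matrixP=> a b; rewrite /sop sdagE !mxE /fs.
set x := enum_val a; set y := enum_val b.
have cn : forall bb : bool, ((bb%:R : C)^* = bb%:R) by case; rewrite ?conjC1 ?conjC0.
rewrite cn.
suff -> : (fdag i (st x) == Some (st y)) =
   ((if i \in st y then Some (st y :\ i) else None) == Some (st x)) by [].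
rewrite /fdag.
case: (boolP (i \in st x)) => ix; case: (boolP (i \in st y)) => iy //=.
- apply/esym/eqP => -[E]; by move: ix; rewrite -E !inE eqxx.
- apply/eqP/eqP => [[E]|[E]]; congr Some.
    by rewrite -E setU1K.
  by rewrite -E setD1K.
- apply/eqP => -[E]; by move: iy; rewrite -E !inE eqxx.
Qed.


Lemma opS_ext f g : (forall Y, f Y = g Y) -> opS f = opS g.
Proof. by move=> H; apply: mkop_ext=> x y; rewrite H. Qed.

Definition psiK (K Y : {set V}) := if K \subset Y then Some (Y :\: K) else None.
Lemma disj_cons (j : V) (T Y : {set V}) :
  ((j |: T) :&: Y == set0) = (j \notin Y) && (T :&: Y == set0).
Proof.
rewrite setIUl setU_eq0; congr andb.
case: (boolP (j \in Y)) => jY /=.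
  by apply/negbTE/set0Pn; exists j; rewrite !inE eqxx.
by apply/eqP/setP=> v; rewrite !inE; case: eqP => // ->; rewrite (negbTE jY).
Qed.

Definition psiJ (J Z : {set V}) := if J :&: Z == set0 then Some (Z :|: J) else None.
Definition psi J K Y := obind (psiJ J) (psiK K Y).

Lemma sops (t : seq V) : uniq t ->
  foldr mulmx 1%:M (map (@sop R V) t) = opS (psiK [set:: t]).
Proof.
elim: t => [|k t IH] /=.
  move=> _; rewrite -opS_Some; apply: opS_ext=> Y.
  by rewrite /psiK (_ : [set:: [::]] = set0) ?sub0set ?setD0 //; apply/setP=> v; rewrite !inE.
case/andP=> kt ut; rewrite IH // sopE opS_mul; apply: opS_ext=> Y.
rewrite /psiK set_cons subUset sub1set.
case: (boolP ([set:: t] \subset Y)) => tY /=; last by rewrite andbF.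
rewrite /fs andbT !inE kt /=; case: (k \in Y) => //.
by congr Some; apply/setP=> v; rewrite !inE; case: (v == k); rewrite ?andbF ?andbT.
Qed.

Lemma sdags (s : seq V) (M : op) : uniq s ->
  foldr mulmx M (map (@sdag R V) s) = opS (psiJ [set:: s]) *m M.
Proof.
elim: s => [|j s IH] /=.
  move=> _; rewrite (_ : opS _ = 1%:M) ?mul1mx // -opS_Some; apply: opS_ext=> Y.
  rewrite /psiJ (_ : [set:: [::]] = set0); last by apply/setP=> v; rewrite !inE.
  by rewrite set0I eqxx setU0.
case/andP=> js us; rewrite IH // sdagE mulmxA opS_mul; congr (_ *m _); apply: opS_ext=> Y.
rewrite /psiJ set_cons disj_cons.
case: (boolP ([set:: s] :&: Y == set0)) => sY /=; last by rewrite andbF.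
rewrite /fdag andbT !inE (negbTE js) orbF; case: (j \in Y) => //=.
by congr Some; apply/setP=> v; rewrite !inE; case: (v == j); rewrite ?orbT ?orbF.
Qed.

Lemma nstringE J K : nstring R J K = opS (psi J K).
Proof.
rewrite /nstring foldr_cat sops ?enum_uniq // sdags ?enum_uniq // opS_mul.
by rewrite !set_enum.
Qed.


Lemma set1_neq0 (i : V) : [set i] != set0.
Proof. by apply/eqP=> E; have := set11 i; rewrite E inE. Qed.

Lemma psi0 J K : psi J K set0 = if K == set0 then Some J else None.
Proof.
rewrite /psi /psiK subset0; case: (K == set0) => //=.
by rewrite /psiJ set0D setI0 eqxx set0U.
Qed.

Lemma psi1 J K i : psi J K [set i] =
  if K == set0 then (if i \in J then None else Some (i |: J))
  else if K == [set i] then Some J else None.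
Proof.
rewrite /psi /psiK subset1.
case: (boolP (K == set0)) => /eqP K0.
  rewrite K0 orbT /= setD0 /psiJ.
  have -> : (J :&: [set i] == set0) = (i \notin J).
    by rewrite setIC; have := disj_cons i set0 J; rewrite set0I eqxx andbT setU0.
  by case: (i \in J).
case: (boolP (K == [set i])) => //= /eqP ->.
by rewrite setDv /psiJ setI0 eqxx set0U.
Qed.

Lemma psi_single J K i S :
  ((psi J K [set i] == Some S)%:R : C) =
  ((i \in S) && (J == S :\ i) && (K == set0))%:R + ((J == S) && (K == [set i]))%:R.
Proof.
rewrite psi1; case: (boolP (K == set0)) => /eqP K0.
  have -> : (K == [set i]) = false.
    by apply/negbTE; rewrite K0 eq_sym set1_neq0.
  rewrite andbF addr0 andbT.
  case: (boolP (i \in J)) => iJ.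
    case: (boolP (J == S :\ i)) => [/eqP JS|]; last by rewrite andbF.
    by move: iJ; rewrite JS !inE eqxx.
  congr (_ %:R); congr (nat_of_bool _); rewrite (inj_eq (@Some_inj _)).
  apply/idP/idP => [/eqP <-|/andP [iS /eqP ->]].
    by rewrite setU1K // setU11 eqxx.
  by rewrite setD1K.
rewrite andbF add0r; case: (boolP (K == [set i])) => _; last by rewrite andbF.
by rewrite andbT (inj_eq (@Some_inj _)).
Qed.

Definition crd (v : vec) (S : {set V}) : C := v (ridx S) 0.

Lemma coord_bvec Y S : crd (bvec Y) S = (S == Y)%:R.
Proof. by rewrite /crd /bvec mxE /ridx enum_rankK exK. Qed.

Lemma coordD v w S : crd (v + w) S = crd v S + crd w S.
Proof. by rewrite /crd mxE. Qed.
Lemma coordZ a v S : crd (a *: v) S = a * crd v S.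
Proof. by rewrite /crd mxE. Qed.
Lemma coord_sum (I : finType) (P : pred I) (F : I -> vec) S :
  crd (\sum_(i | P i) F i) S = \sum_(i | P i) crd (F i) S.
Proof. by rewrite /crd summxE. Qed.

Lemma vacE : vac R V = bvec set0.
Proof.
apply/colP=> a; rewrite !mxE; congr (_ %:R); congr (nat_of_bool _); apply/eqP/eqP => [->|E].
  by apply/setP=> v; rewrite !inE ffunE.
by apply: (can_inj stK); rewrite E; apply/setP=> v; rewrite !inE ffunE.
Qed.

Lemma count1 (A : {set V}) :
  \sum_(i : V) ((A == [set i])%:R : C) = (#|A| == 1%N)%:R.
Proof.
case: (boolP (#|A| == 1%N)) => [/cards1P [x ->]|A1].
  rewrite (bigD1 x) //= eqxx big1 ?addr0 // => i ix.
  by rewrite (inj_eq set1_inj) eq_sym (negbTE ix).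
by apply: big1 => i _; case: eqP => // E; move: A1; rewrite E cards1.
Qed.

Definition kappa : C := (sqrtC (#|V|%:R))^-1.

Lemma WstE : Wst R V = kappa *: \sum_(i : V) bvec [set i].
Proof.
apply/colP=> a; rewrite !mxE summxE.
under eq_bigr do rewrite mxE.
rewrite count1 /kappa; case: (_ == _); by rewrite ?mulr1 ?mulr0.
Qed.

End Ops.

Section Supp.
Variable R : realType.
Variable V : finType.
Notation C := (R[i]).
Notation op := (op R V).
Notation vec := (vec R V).
Notation state := (state V).

Definition ext (X : {set V}) (a : local X) : state :=
  [ffun v => if insub v is Some u then a u else false].

Lemma st_ext X (y : state) : st (ext (restr X y)) = st y :&: X.
Proof.
apply/setP=> v; rewrite !inE ffunE; case: insubP => [u uX <-|/negbTE ->].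
  by rewrite ffunE (valP u) andbT.
by rewrite andbF.
Qed.

Lemma prod_eqR (X : {set V}) (x y : state) :
  \prod_(v in ~: X) (((x v == y v) : bool)%:R : C) =
  ([forall v in ~: X, x v == y v] : bool)%:R.
Proof.
case: forallP => [H|H].
  by apply: big1 => v vX; have := H v; rewrite vX /= => ->.
have [v] : exists v, ~~ ((v \in ~: X) ==> (x v == y v)).
  by apply/existsP; rewrite -negb_forall; apply/forallP.
rewrite negb_imply => /andP [vX nxy].
by rewrite (bigD1 v) //= (negbTE nxy) mul0r.
Qed.

Lemma opS_supported X f :
  (forall Y, f Y = omap (fun Z => Z :|: (Y :\: X)) (f (Y :&: X))) ->
  (forall Y Z, f (Y :&: X) = Some Z -> Z \subset X) ->
  supported X (@opS R V f).
Proof.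
move=> floc fsub.
exists (fun a b => (f (st (ext b)) == Some (st (ext a)))%:R).
apply: mkop_ext=> x y; rewrite !st_ext prod_eqR.
set Yx := st x; set Yy := st y.
suff -> : (f Yy == Some Yx) =
   (f (Yy :&: X) == Some (Yx :&: X)) && [forall v in ~: X, x v == y v].
  by case: (f _ == _); case: [forall _ in _, _]; rewrite ?mulr1 ?mulr0.
rewrite floc.
case E: (f (Yy :&: X)) => [Z|] //=.
have ZX := fsub _ _ E.
rewrite !(inj_eq (@Some_inj _)).
have ZnX : forall v, v \notin X -> (v \in Z) = false.
  by move=> v vX; apply/negbTE; apply: contra vX => /(subsetP ZX).
apply/eqP/andP => [E2|[/eqP ZE /forallP Hxy]].
  split.
    rewrite -E2; apply/eqP/setP=> v; rewrite !inE.
    case: (boolP (v \in X)) => vX; rewrite ?andbT ?andbF //=.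
      by rewrite orbF.
    by rewrite ZnX.
  apply/forallP=> v; apply/implyP; rewrite !inE => vX.
  have : (v \in Yx) = (v \in Yy) by rewrite -E2 !inE vX ZnX.
  by rewrite /Yx /Yy !inE => ->.
apply/setP=> v; rewrite !inE /Yx /Yy.
case: (boolP (v \in X)) => vX.
  have : (v \in Z) = (v \in Yx :&: X) by rewrite ZE.
  by rewrite !inE vX andbT => ->; rewrite orbF.
have := Hxy v; rewrite !inE vX /= => /eqP ->.
by rewrite ZnX.
Qed.


Lemma nstring_supported (X J K : {set V}) : J :|: K \subset X -> supported X (nstring R J K).
Proof.
rewrite subUset => /andP [sJ sK].
have jx := subsetP sJ; have kx := subsetP sK.
rewrite nstringE; apply: opS_supported.
  move=> Y; rewrite /psi /psiK subsetI sK andbT.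
  case: (K \subset Y) => //=.
  rewrite /psiJ.
  have -> : J :&: (Y :&: X :\: K) = J :&: (Y :\: K).
    apply/setP=> v; rewrite !inE.
    by case: (boolP (v \in J)) => vJ //=; rewrite (jx v vJ) andbT.
  case: (_ == set0) => //=; congr Some.
  apply/setP=> v; rewrite !inE.
  case: (boolP (v \in J)) => vJ; rewrite ?orbT //= ?orbF.
  case: (boolP (v \in K)) => vK; first by rewrite (kx v vK).
  by case: (v \in X); case: (v \in Y).
move=> Y Z; rewrite /psi /psiK; case: (K \subset _) => //=.
rewrite /psiJ; case: (_ == set0) => //= -[<-].
apply/subsetP=> v; rewrite !inE; case/orP => [/andP [_ /andP [_ ->]] //|].
exact: jx.
Qed.

End Supp.

Section Main.
Variable R : realType.
Variable V : finType.
Notation C := (R[i]).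
Notation op := (op R V).
Notation vec := (vec R V).
Variable c : {set V} -> {set V} -> C.
Variable lam : C.
Hypothesis NV0 : (0 < #|V|)%N.

Definition HH : op := \sum_(J : {set V}) \sum_(K : {set V}) c J K *: nstring R J K.
Hypothesis H_eig : HH *m Wst R V = lam *: Wst R V.

Lemma coord_opt (o : option {set V}) (S : {set V}) :
  crd (if o is Some Z then bvec R Z else 0) S = (o == Some S)%:R.
Proof.
case: o => [Z|]; last by rewrite /crd mxE.
by rewrite coord_bvec (inj_eq (@Some_inj _)) eq_sym.
Qed.

Lemma kappa_neq0 : kappa R V != 0.
Proof. by rewrite /kappa invr_eq0 sqrtC_eq0 pnatr_eq0 -lt0n. Qed.

Lemma delta2 (J0 K0 : {set V}) :
  \sum_(J : {set V}) \sum_(K : {set V}) c J K * ((J == J0) && (K == K0))%:R = c J0 K0.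
Proof.
rewrite (bigD1 J0) //= [X in _ + X]big1 ?addr0; last first.
  by move=> J /negbTE JJ; apply: big1 => K _; rewrite JJ mulr0.
rewrite (bigD1 K0) //= !eqxx /= mulr1 [X in _ + X]big1 ?addr0 //.
by move=> K /negbTE KK; rewrite KK mulr0.
Qed.

Lemma nsW (J K S : {set V}) : crd (nstring R J K *m Wst R V) S =
   kappa R V * \sum_i ((psi J K [set i] == Some S)%:R).
Proof.
rewrite WstE -scalemxAr mulmx_sumr coordZ coord_sum; congr (_ * _).
by apply: eq_bigr => i _; rewrite nstringE opS_bvec coord_opt.
Qed.

Lemma HW (S : {set V}) : crd (HH *m Wst R V) S =
  kappa R V * (\sum_(i in S) c (S :\ i) set0 + \sum_i c S [set i]).
Proof.
rewrite /HH mulmx_suml coord_sum.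
transitivity (\sum_(J : {set V}) \sum_(K : {set V})
   kappa R V * \sum_i (c J K * (psi J K [set i] == Some S)%:R)).
  apply: eq_bigr => J _; rewrite mulmx_suml coord_sum; apply: eq_bigr => K _.
  by rewrite -scalemxAl coordZ nsW mulrCA; congr (_ * _); rewrite mulr_sumr.
transitivity (kappa R V * \sum_i \sum_(J : {set V}) \sum_(K : {set V})
   (c J K * (psi J K [set i] == Some S)%:R)).
  transitivity (\sum_(J : {set V}) \sum_(K : {set V}) \sum_i
     kappa R V * (c J K * (psi J K [set i] == Some S)%:R)).
    by apply: eq_bigr => J _; apply: eq_bigr => K _; rewrite mulr_sumr.
  transitivity (\sum_(J : {set V}) \sum_i \sum_(K : {set V})
     kappa R V * (c J K * (psi J K [set i] == Some S)%:R)).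
    by apply: eq_bigr => J _; exact: exchange_big.
  rewrite exchange_big /= mulr_sumr; apply: eq_bigr => i _.
  rewrite mulr_sumr; apply: eq_bigr => J _.
  by rewrite mulr_sumr.
congr (_ * _).
rewrite [X in _ = X + _]big_mkcond -big_split /=; apply: eq_bigr => i _.
transitivity (\sum_(J : {set V}) \sum_(K : {set V})
   (c J K * ((i \in S) && (J == S :\ i) && (K == set0))%:R +
    c J K * ((J == S) && (K == [set i]))%:R)).
  by apply: eq_bigr => J _; apply: eq_bigr => K _; rewrite psi_single mulrDr.
rewrite (eq_bigr _ (fun J _ => big_split _ _ _ _ _)) big_split /= delta2.
congr (_ + _).
case: (boolP (i \in S)) => iS.
  rewrite -(delta2 (S :\ i) set0); apply: eq_bigr => J _; apply: eq_bigr => K _.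
  by [].
by apply: big1 => J _; apply: big1 => K _; rewrite mulr0.
Qed.

Lemma EqS (S : {set V}) :
  \sum_(i in S) c (S :\ i) set0 + \sum_i c S [set i] = lam * (#|S| == 1%N)%:R.
Proof.
have := congr1 (fun v => crd v S) H_eig; rewrite /= HW coordZ WstE coordZ coord_sum.
rewrite (eq_bigr _ (fun i _ => coord_bvec _ _ _)) count1 mulrCA.
by move/(mulfI kappa_neq0).
Qed.


End Main.

Section Dec.
Variable R : realType.
Variable V : finType.
Notation C := (R[i]).
Notation op := (op R V).
Variable e : rel V.
Variable Rr : nat.

Definition Dp (M : op) := exists h : {set V} -> op,
  (forall X : {set V}, (diam e X <= 2 * Rr)%N ->
     supported X (h X) /\ h X *m Wst R V = 0 /\ h X *m vac R V = 0) /\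
  M = \sum_(X : {set V} | (diam e X <= 2 * Rr)%N) h X.

Lemma supported0 (X : {set V}) : supported X (0 : op).
Proof. by exists (fun _ _ => 0); apply/matrixP=> a b; rewrite !mxE mul0r. Qed.

Lemma supportedD (X : {set V}) (M N : op) :
  supported X M -> supported X N -> supported X (M + N).
Proof.
case=> A ->; case=> B ->; exists (fun a b => A a b + B a b).
by apply/matrixP=> a b; rewrite !mxE mulrDl.
Qed.

Lemma supportedZ (X : {set V}) (k : C) (M : op) :
  supported X M -> supported X (k *: M).
Proof.
case=> A ->; exists (fun a b => k * A a b).
by apply/matrixP=> a b; rewrite !mxE mulrA.
Qed.

Lemma supportedB (X : {set V}) (M N : op) :
  supported X M -> supported X N -> supported X (M - N).
Proof. by move=> hM hN; rewrite -scaleN1r; apply: supportedD hM (supportedZ _ hN). Qed.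

Lemma Dp0 : Dp 0.
Proof.
exists (fun _ => 0); split; last by rewrite big1.
by move=> X _; rewrite !mul0mx; split=> //; exact: supported0.
Qed.

Lemma DpD M N : Dp M -> Dp N -> Dp (M + N).
Proof.
case=> h1 [H1 ->]; case=> h2 [H2 ->]; exists (fun X => h1 X + h2 X); split.
  move=> X hX; have [s1 [w1 v1]] := H1 X hX; have [s2 [w2 v2]] := H2 X hX.
  by rewrite !mulmxDl w1 w2 v1 v2 !addr0; split=> //; exact: supportedD.
by rewrite big_split.
Qed.

Lemma DpZ k M : Dp M -> Dp (k *: M).
Proof.
case=> h [H1 ->]; exists (fun X => k *: h X); split.
  move=> X hX; have [s1 [w1 v1]] := H1 X hX.
  by rewrite -!scalemxAl w1 v1 !scaler0; split=> //; exact: supportedZ.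
by rewrite scaler_sumr.
Qed.

Lemma Dpsum (I : finType) (P : pred I) (F : I -> op) :
  (forall i, P i -> Dp (F i)) -> Dp (\sum_(i | P i) F i).
Proof.
move=> H; elim/big_rec: _ => [|i M Pi DM]; first exact: Dp0.
exact: DpD (H i Pi) DM.
Qed.

Lemma Dploc (X : {set V}) M : supported X M -> (diam e X <= 2 * Rr)%N ->
  M *m Wst R V = 0 -> M *m vac R V = 0 -> Dp M.
Proof.
move=> sM dX wM vM; exists (fun Y => if Y == X then M else 0); split.
  move=> Y _; case: eqP => [->|_]; first by [].
  by rewrite !mul0mx; split=> //; exact: supported0.
by rewrite (bigD1 X) //= eqxx big1 ?addr0 // => Y /andP [_ /negbTE ->].
Qed.

End Dec.

Section Final.
Variable R : realType.
Variable V : finType.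
Notation C := (R[i]).
Notation op := (op R V).
Variable e : rel V.
Hypothesis e_sym : symmetric e.
Hypothesis e_conn : forall i j : V, connect e i j.
Variable Rr : nat.
Hypothesis Rr_pos : (0 < Rr)%N.
Hypothesis HN : (maxdeg e ^ (4 * Rr) + 1 < #|V|)%N.
Variable c : {set V} -> {set V} -> C.
Hypothesis Hr : forall J K, c J K != 0 -> (srange e (J :|: K) <= Rr)%N.
Variable lam : C.
Hypothesis H_eig : HH c *m Wst R V = lam *: Wst R V.

Lemma D2 : (2 <= maxdeg e)%N.
Proof.
rewrite leqNgt; apply/negP=> D1; apply: (small_deg_contra e_sym e_conn) => //.
apply: leq_ltn_trans HN; rewrite addn1 ltnS.
move: D1; case: (maxdeg e) => [|[|//]] _; first by rewrite exp0n ?muln_gt0.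
by rewrite exp1n.
Qed.

Lemma NV0 : (0 < #|V|)%N.
Proof. exact: leq_ltn_trans HN. Qed.

Lemma RV : (Rr.-1 < #|V|)%N.
Proof.
have h1 := ltn_expl (4 * Rr) (isT : (1 < 2)%N).
have h2 : (2 ^ (4 * Rr) <= maxdeg e ^ (4 * Rr))%N by rewrite leq_exp2r ?muln_gt0 ?Rr_pos // D2.
move: h1 h2 HN; set x := (2 ^ _)%N; set y := (maxdeg e ^ _)%N; lia.
Qed.

Definition mm := (2 * Rr).-1.

Lemma pow_bound m : (2 * (maxdeg e).+1 ^ m <= maxdeg e ^ (2 * m + 1))%N.
Proof.
have D := D2; elim: m => [|m IH]; first by rewrite expn0 muln1 expn1.
rewrite expnS mulnCA (_ : (2 * m.+1 + 1 = (2 * m + 1) + 2)%N); last by lia.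
rewrite expnD mulnC; apply: leq_mul => //.
rewrite expnS expn1; nia.
Qed.

Lemma NVbound : (2 * (maxdeg e).+1 ^ mm < #|V|)%N.
Proof.
apply: leq_ltn_trans (pow_bound mm) _.
have h : (maxdeg e ^ (2 * mm + 1) <= maxdeg e ^ (4 * Rr))%N.
  by rewrite leq_pexp2l ?(leq_trans _ D2) // /mm; lia.
move: h HN; set x := (maxdeg e ^ (2 * mm + 1))%N; set y := (maxdeg e ^ _)%N; lia.
Qed.

Lemma far m' : (m' <= mm)%N -> forall a b, exists d,
  ~~ reach e m' a d /\ ~~ reach e m' b d.
Proof.
move=> hm a b; have [d /andP [h1 h2]] := far2 D2 NVbound a b.
by exists d; split; [apply: contra h1|apply: contra h2] => h; apply: reach_le hm h.
Qed.

Lemma cfar J K u v : u \in J :|: K -> v \in J :|: K -> ~~ reach e Rr.-1 u v -> c J K = 0.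
Proof.
move=> uS vS nr; apply/eqP; apply: contraNT nr => /Hr hS.
by apply: srange_reach RV uS vS; rewrite prednK.
Qed.

Lemma neq_far u v : ~~ reach e Rr.-1 u v -> u != v.
Proof.
apply: contra => /eqP ->; apply: (@reach_le _ _ 0) => //=.
Qed.

Lemma pair_eq u v : ~~ reach e Rr.-1 u v -> c [set u] set0 + c [set v] set0 = 0.
Proof.
move=> nr; have uv := neq_far nr.
have := EqS NV0 H_eig [set u; v].
rewrite cards2 uv /= mulr0 [X in _ + X = _]big1 ?addr0; last first.
  by move=> i _; apply: (cfar (u := u) (v := v)) nr; rewrite !inE eqxx ?orbT.
have unv : u \notin [set v] by rewrite inE.
rewrite big_setU1 //= big_set1 setU1K //.
have -> : [set u; v] :\ v = [set u].
  apply/setP=> w; rewrite !inE; case: (eqVneq w v) => [->|wv] /=.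
    by rewrite eq_sym (negbTE uv).
  by rewrite orbF.
by rewrite addrC.
Qed.


Lemma Rm : (Rr.-1 <= mm)%N.
Proof. rewrite /mm; lia. Qed.

Lemma single_zero a : c [set a] set0 = 0.
Proof.
have [b [hab _]] := far (leqnn mm) a a.
have [d [had hbd]] := far (leqnn mm) a b.
have nr : forall x y, ~~ reach e mm x y -> ~~ reach e Rr.-1 x y.
  by move=> x y; apply: contra; apply: reach_le Rm.
have E1 := pair_eq (nr _ _ hab); have E2 := pair_eq (nr _ _ had).
have E3 := pair_eq (nr _ _ hbd).
have Eb : c [set b] set0 = - c [set a] set0.
  by apply/eqP; rewrite -addr_eq0 addrC E1.
have Ed : c [set d] set0 = - c [set a] set0.
  by apply/eqP; rewrite -addr_eq0 addrC E2.
move: E3; rewrite Eb Ed -opprD => /eqP; rewrite oppr_eq0 -mulr2n mulrn_eq0 /=.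
by move/eqP.
Qed.



Lemma multi_zero (J : {set V}) : (2 <= #|J|)%N -> c J set0 = 0.
Proof.
move=> J2; case: (eqVneq (c J set0) 0) => // cne.
have hJ := Hr cne; rewrite setU0 in hJ.
have rJ : forall u v, u \in J -> v \in J -> reach e Rr.-1 u v.
  by move=> u v uJ vJ; apply: srange_reach RV uJ vJ; rewrite prednK.
have : (0 < #|J|)%N by apply: leq_trans J2.
case/card_gt0P=> a aJ.
have [b [hab _]] := far (leqnn mm) a a.
have farJ : forall j, j \in J -> ~~ reach e Rr.-1 j b.
  move=> j jJ; apply: contra hab => h.
  apply: reach_le (reach_trans (rJ _ _ aJ jJ) h); rewrite /mm; lia.
have bJ : b \notin J.
  by apply/negP=> bJ; have := farJ _ bJ; rewrite (@reach_le _ _ 0) //= eqxx.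
have := EqS NV0 H_eig (b |: J).
rewrite cardsU1 bJ /= (_ : (1 + #|J| == 1)%N = false) ?mulr0; last by lia.
rewrite [X in _ + X = _]big1 ?addr0; last first.
  move=> i _; apply: (cfar (u := a) (v := b)); last by apply: farJ.
    by rewrite !inE aJ ?orbT.
  by rewrite !inE eqxx.
rewrite big_setU1 //= setU1K // big1 ?addr0 //.
move=> i iJ.
have : (0 < #|J :\ i|)%N by move: J2; rewrite (cardsD1 i J) iJ; lia.
case/card_gt0P=> j; rewrite !inE => /andP [ji jJ].
apply: (cfar (u := j) (v := b)); last by apply: farJ.
  by rewrite !inE ji jJ orbT.
have bi : b != i by apply/eqP=> bi; move: bJ; rewrite bi iJ.
by rewrite !inE eqxx bi.
Qed.

Lemma claimA (J : {set V}) : J != set0 -> c J set0 = 0.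
Proof.
move=> J0; case: (boolP (#|J| == 1%N)) => [/cards1P [a ->]|J1].
  exact: single_zero.
apply: multi_zero; move: J1 J0; rewrite -cards_eq0; lia.
Qed.

Definition om := lam - c set0 set0.

Lemma sumS (J : {set V}) : \sum_i c J [set i] = om * (#|J| == 1%N)%:R.
Proof.
have := EqS NV0 H_eig J.
case: (boolP (#|J| == 1%N)) => [/cards1P [a ->]|J1].
  rewrite big_set1 setDv !mulr1 => E.
  by rewrite /om -E addrC addKr.
rewrite !mulr0 big1 ?add0r // => i iJ.
apply: claimA; apply/set0Pn.
have : (0 < #|J :\ i|)%N.
  move: J1; rewrite (cardsD1 i J) iJ.
  have : #|J| != 0%N by rewrite cards_eq0; apply/set0Pn; exists i.
  rewrite (cardsD1 i J) iJ; lia.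
by case/card_gt0P=> j jJ; exists j.
Qed.


Lemma NSW (J K : {set V}) : nstring R J K *m Wst R V =
  kappa R V *: \sum_i (if psi J K [set i] is Some Z then bvec R Z else 0).
Proof.
rewrite WstE -scalemxAr mulmx_sumr; congr (_ *: _).
by apply: eq_bigr => i _; rewrite nstringE opS_bvec.
Qed.

Lemma NSvac (J K : {set V}) : nstring R J K *m vac R V =
  if psi J K set0 is Some Z then bvec R Z else 0.
Proof. by rewrite vacE nstringE opS_bvec. Qed.

Lemma NSvac0 (J K : {set V}) : K != set0 -> nstring R J K *m vac R V = 0.
Proof. by move=> K0; rewrite NSvac psi0 (negbTE K0). Qed.

Lemma NS1W (J : {set V}) (k : V) : nstring R J [set k] *m Wst R V = kappa R V *: bvec R J.
Proof.
rewrite NSW; congr (_ *: _); rewrite (bigD1 k) //= psi1 (negbTE (set1_neq0 k)) eqxx.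
rewrite big1 ?addr0 // => i ik; rewrite psi1 (negbTE (set1_neq0 k)).
by rewrite (inj_eq set1_inj) eq_sym (negbTE ik).
Qed.

Lemma diam_srange (X : {set V}) : diam e X = srange e X.
Proof. by []. Qed.

Lemma piece_big (J K : {set V}) : (1 < #|K|)%N -> Dp e Rr (c J K *: nstring R J K).
Proof.
move=> K2; case: (eqVneq (c J K) 0) => [->|cne]; first by rewrite scale0r; exact: Dp0.
apply: (Dploc (X := J :|: K)).
- by apply: supportedZ; apply: nstring_supported.
- by rewrite diam_srange; apply: leq_trans (Hr cne) _; lia.
- rewrite -scalemxAl NSW big1 ?scaler0 ?scaler0 // => i _.
  rewrite psi1; case: eqP => [K0|_]; first by move: K2; rewrite K0 cards0.
  by case: eqP => // K1; move: K2; rewrite K1 cards1.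
- by rewrite -scalemxAl NSvac0 ?scaler0 //; apply/eqP=> K0; move: K2; rewrite K0 cards0.
Qed.

Lemma piece_diff (J : {set V}) (k a : V) : a \in J ->
  Dp e Rr (c J [set k] *: (nstring R J [set k] - nstring R J [set a])).
Proof.
move=> aJ; case: (eqVneq (c J [set k]) 0) => [->|cne]; first by rewrite scale0r; exact: Dp0.
apply: (Dploc (X := J :|: [set k])).
- apply: supportedZ; apply: supportedB; apply: nstring_supported => //.
  by apply/subsetP=> v; rewrite !inE; case/orP=> [->//|/eqP ->]; rewrite aJ.
- by rewrite diam_srange; apply: leq_trans (Hr cne) _; lia.
- by rewrite -scalemxAl mulmxBl !NS1W subrr scaler0.
- by rewrite -scalemxAl mulmxBl !NSvac0 ?subrr ?scaler0 // set1_neq0.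
Qed.

Lemma piece_edge u v : e u v ->
  Dp e Rr (nstring R set0 [set v] - nstring R set0 [set u]).
Proof.
move=> euv; apply: (Dploc (X := [set u; v])).
- apply: supportedB; apply: nstring_supported; rewrite set0U;
    apply/subsetP=> w; rewrite !inE => ->; rewrite ?orbT //.
- apply: leq_trans (diam_le (n := 1) _) _; last by lia.
  move=> x y; rewrite !inE => /orP [] /eqP -> /orP [] /eqP ->.
  + by rewrite /= eqxx.
  + exact: reach_edge euv.
  + by apply: reach_edge; rewrite e_sym.
  + by rewrite /= eqxx.
- by rewrite mulmxBl !NS1W subrr.
- by rewrite mulmxBl !NSvac0 ?subrr // set1_neq0.
Qed.

Lemma piece_path r n v : reach e n r v ->
  Dp e Rr (nstring R set0 [set v] - nstring R set0 [set r]).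
Proof.
elim: n v => [|n IH] v /=; first by move/eqP=> ->; rewrite subrr; exact: Dp0.
case/orP => [h|/existsP [k /andP [h ekv]]]; first exact: IH.
rewrite -(subrK (nstring R set0 [set k]) (nstring R set0 [set v])) -addrA.
by apply: DpD; [apply: piece_edge | apply: IH].
Qed.


Lemma pick1 (f : {set V} -> op) (K0 : {set V}) :
  \sum_(K : {set V}) ((K == K0)%:R : C) *: f K = f K0.
Proof.
rewrite (bigD1 K0) //= eqxx scale1r big1 ?addr0 // => K /negbTE ->.
by rewrite scale0r.
Qed.

Lemma split_K (f : {set V} -> op) :
  \sum_(K : {set V}) f K =
  f set0 + \sum_i f [set i] + \sum_(K : {set V} | (1 < #|K|)%N) f K.
Proof.
transitivity (\sum_(K : {set V}) ((((K == set0)%:R + (#|K| == 1%N)%:R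
     + (1 < #|K|)%N%:R) : C) *: f K)).
  apply: eq_bigr => K _.
  case: (boolP (K == set0)) => [/eqP ->|K0]; first by rewrite cards0 /= !addr0 scale1r.
  have : #|K| != 0%N by rewrite cards_eq0.
  by case: #|K| => [|[|n]] //= _; rewrite ?add0r ?addr0 scale1r.
rewrite (eq_bigr _ (fun K _ => scalerDl _ _ _)) big_split /=.
rewrite (eq_bigr _ (fun K _ => scalerDl _ _ _)) big_split /= pick1.
congr (_ + _ + _).
  transitivity (\sum_(K : {set V}) \sum_i ((K == [set i])%:R : C) *: f K).
    by apply: eq_bigr => K _; rewrite -scaler_suml count1.
  by rewrite exchange_big /=; apply: eq_bigr => i _; rewrite pick1.
rewrite [RHS]big_mkcond /=; apply: eq_bigr => K _.
by case: (1 < #|K|)%N; rewrite ?scale1r ?scale0r.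
Qed.

Lemma rearr (T : zmodType) (x1 x2 x3 a b : T) :
  x1 + x2 + x3 - a - b = (x1 - a) + ((x2 - b) + x3).
Proof. by rewrite addrA addrACA -[LHS]addrA (addrAC (x1 + x2)). Qed.

Lemma decomp (r : V) :
  Dp e Rr (HH c - (c set0 set0)%:M - om *: numop R V).
Proof.
pose aJ (J : {set V}) := odflt r [pick x in J].
have aJin : forall J, J != set0 -> aJ J \in J.
  move=> J /set0Pn [x xJ]; rewrite /aJ; case: pickP => [y yJ //|h].
  by move: (h x); rewrite xJ.
have aJ1 : forall a, aJ [set a] = a.
  by move=> a; apply/set1P; apply: aJin; apply: set1_neq0.
have aJ0 : aJ set0 = r.
  by rewrite /aJ; case: pickP => // x; rewrite inE.
pose B (J : {set V}) := \sum_i c J [set i] *: nstring R J [set i].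
pose Cc (J : {set V}) := \sum_(K : {set V} | (1 < #|K|)%N) c J K *: nstring R J K.
pose Dd (J : {set V}) :=
  \sum_i c J [set i] *: (nstring R J [set i] - nstring R J [set aJ J]).
have Bsplit : forall J, B J = Dd J + (\sum_i c J [set i]) *: nstring R J [set aJ J].
  move=> J; rewrite /B /Dd scaler_suml -big_split /=; apply: eq_bigr => i _.
  by rewrite scalerBr subrK.
have HHE : HH c = (\sum_(J : {set V}) c J set0 *: nstring R J set0)
                  + \sum_(J : {set V}) B J + \sum_(J : {set V}) Cc J.
  rewrite /HH -!big_split; apply: eq_bigr => J _.
  exact: (split_K (fun K => c J K *: nstring R J K)).
have E1 : \sum_(J : {set V}) c J set0 *: nstring R J set0 = (c set0 set0)%:M.
  rewrite (bigD1 set0) //= big1 ?addr0.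
    by rewrite /nstring enum_set0 /= scalemx1.
  by move=> J J0; rewrite claimA // scale0r.
have E2 : \sum_(J : {set V}) B J =
          (Dd set0 + \sum_(J : {set V} | J != set0) Dd J) + om *: numop R V.
  rewrite (bigD1 set0) //= Bsplit sumS cards0 /= mulr0 scale0r addr0 -addrA.
  congr (_ + _).
  rewrite (eq_bigr _ (fun J _ => Bsplit J)) big_split /=; congr (_ + _).
  transitivity (om *: \sum_(J : {set V}) ((#|J| == 1%N)%:R : C) *: nstring R J [set aJ J]).
    rewrite scaler_sumr [RHS](bigD1 set0) //= cards0 /= scale0r scaler0 add0r.
    by apply: eq_bigr => J _; rewrite sumS scalerA.
  congr (_ *: _).
  transitivity (\sum_(J : {set V}) \sum_a ((J == [set a])%:R : C) *: nstring R J [set aJ J]).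
    by apply: eq_bigr => J _; rewrite -scaler_suml count1.
  rewrite exchange_big /=; apply: eq_bigr => a _.
  by rewrite pick1 aJ1 /nstring enum_set1 /= mulmx1.
rewrite HHE E1 E2 rearr subrr addrK.
apply: DpD; first exact: Dp0.
apply: DpD; last by apply: Dpsum => J _; apply: Dpsum => K K2; apply: piece_big.
apply: DpD; last by apply: Dpsum => J J0; apply: Dpsum => i _; apply: piece_diff; apply: aJin.
apply: Dpsum => i _; apply: DpZ; rewrite aJ0.
have [n hn] := connect_reach (e_conn r i).
exact: piece_path hn.
Qed.

End Final.

Theorem proposition4 (R : realType) (V : finType) (e : rel V)
    (e_sym : symmetric e) (e_irr : irreflexive e)
    (e_conn : forall i j : V, connect e i j)
    (Rr : nat) (Rr_pos : (0 < Rr)%N)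
    (HN : (maxdeg e ^ (4 * Rr) + 1 < #|V|)%N)
    (H : op R V) (H_range : range_le e Rr H)
    (lam : R[i]) (H_eig : H *m Wst R V = lam *: Wst R V) :
  exists (Om om : R[i]) (h : {set V} -> op R V),
    (forall X : {set V}, (diam e X <= 2 * Rr)%N ->
       supported X (h X) /\ h X *m Wst R V = 0 /\ h X *m vac R V = 0) /\
    H = Om%:M + om *: numop R V + \sum_(X : {set V} | (diam e X <= 2 * Rr)%N) h X.
Proof.
have [c [Hc Hr]] := H_range.
have H_eig' : HH c *m Wst R V = lam *: Wst R V by rewrite /HH -Hc.
have : (0 < #|V|)%N by apply: leq_ltn_trans HN.
case/card_gt0P=> r _.
have [h [hP hE]] := decomp e_sym e_conn Rr_pos HN Hr H_eig' r.
exists (c set0 set0), (om c lam), h; split => //.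
rewrite -hE /HH -Hc -[H - _ - _]addrA -opprD.
by rewrite addrC addNKr.
Qed.
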